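(* Let $(X,d)$ be a metric space with $|X|=n$ and $k\in[n]$. The procedure $\mathtt{recMSD}(X,k)$ runs in time $n^{O(1)}$.
   Context: $\operatorname{diam}(S)=\max_{p,q\in S}d(p,q)$, $\operatorname{Ball}(x,R)=\{z\in X:d(x,z)\le R\}$, and the cost of a collection of clusters is the sum of their diameters. The randomized procedure $\mathtt{recMSD}(S,t)$ (for nonempty $S\subseteq X$, $t\in[k]$) is: set $\mathcal{C}_i\gets\{S\}$ for all $i\in\{1,\dots,t\}$; if $t=1$ or $|S|=1$, return $(\mathcal{C}_1,\dots,\mathcal{C}_t)$. Otherwise let $x,y\in S$ with $d(x,y)=\operatorname{diam}(S)$, choose $R\in[0,\operatorname{diam}(S)]$ uniformly at random, let $S_1=S\cap\operatorname{Ball}(x,R)$ and $S_2=S\setminus\operatorname{Ball}(x,R)$, compute $\mathcal{A}=\mathtt{recMSD}(S_1,t-1)$ and $\mathcal{B}=\mathtt{recMSD}(S_2,t-1)$; then for all $i,j\in\{1,\dots,t-1\}$ with $i+j\le t$, if $\operatorname{cost}(\mathcal{A}_i\cup\mathcal{B}_j)<\operatorname{cost}(\mathcal{C}_{i+j})$ set $\mathcal{C}_{i+j}\gets\mathcal{A}_i\cup\mathcal{B}_j$. Return $(\mathcal{C}_1,\dots,\mathcal{C}_t)$. *)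

(* Defs.v *)
From HB Require Import structures.
From mathcomp Require Import all_boot all_order all_algebra.
Set Implicit Arguments. Unset Strict Implicit. Unset Printing Implicit Defensive.
Import Order.TTheory GRing.Theory Num.Theory.
Local Open Scope ring_scope.

Section RecMSD.
Variables (R : realFieldType) (T : finType) (d : T -> T -> R).

Definition is_metric : Prop :=
  [/\ forall x y, 0 <= d x y,
      forall x y, d x y = 0 <-> x = y,
      forall x y, d x y = d y x &
      forall x y z, d x z <= d x y + d y z].

(** diam(S) = max_{p,q in S} d(p,q)  (0 for the empty set) *)
Definition diam (S : {set T}) : R :=
  \big[Num.max/0]_(pq in setX S S) d pq.1 pq.2.

Definition ball_in (S : {set T}) (x : T) (r : R) : {set T} :=
  [set z in S | d x z <= r].

(** [pick S] returns the pair (x,y) used by the algorithm; we only require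
    it to be a diametral pair of S whenever S is nonempty. *)
Definition diametral_picker (pick : {set T} -> T * T) : Prop :=
  forall S : {set T}, S != set0 ->
    [/\ (pick S).1 \in S, (pick S).2 \in S & d (pick S).1 (pick S).2 = diam S].

(** Cost of the local (non-recursive) work of one call recMSD(S,t):
    - initialising C_1..C_t : t
    - finding a diametral pair : |S|^2 distance evaluations
    - computing S1, S2 : |S|
    - for each of the <= t^2 pairs (i,j): computing cost(A_i u B_j)
      (sum of diameters of clusters partitioning S, <= |S|^2 distance
      evaluations) and one comparison. *)
Definition local_cost (S : {set T}) (t : nat) : nat :=
  (t + #|S| ^ 2 + #|S| + t ^ 2 * (#|S| ^ 2 + 1))%N.

(** Randomness: the uniformly random
    R in [0, diam S] is written R = u p * diam S, where p : seq bool is the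
    position of the call in the recursion tree and 0 <= u p <= 1.
    Base case (t = 1 or |S| <= 1): cost t (initialisation) + 1 (test). *)
Fixpoint rec_time (pick : {set T} -> T * T) (u : seq bool -> R)
    (t : nat) (S : {set T}) (p : seq bool) {struct t} : nat :=
  match t with
  | 0 => 1%N
  | t'.+1 =>
      if (t' == 0%N) || (#|S| <= 1)%N then (t + 1)%N
      else
        let x := (pick S).1 in
        let r := u p * diam S in
        let S1 := ball_in S x r in
        let S2 := S :\: S1 in
        (local_cost S t + 1 + rec_time pick u t' S1 (rcons p false)
                           + rec_time pick u t' S2 (rcons p true))%N
  end.

End RecMSD.

(* Main.v *)
Require Import Defs.
From HB Require Import structures.
From mathcomp Require Import all_boot all_order all_algebra.
From mathcomp Require Import zify.
Import Order.TTheory GRing.Theory Num.Theory.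
Local Open Scope ring_scope.

Lemma rec_bound (R : realFieldType) (T : finType) (d : T -> T -> R)
  (pick : {set T} -> T * T) (u : seq bool -> R) (t0 M : nat) :
  (forall (S : {set T}) t, (t <= t0)%N -> (local_cost S t + t <= M)%N) ->
  forall t, (t <= t0)%N -> forall S p,
  (rec_time d pick u t S p <= M * t * #|S| + t + 1)%N.
Proof.
move=> HL; elim=> [|t IH] Ht S p /=; first by rewrite muln0 mul0n.
case: ifP => [_|/norP [_ HS]]; first by lia.
rewrite -ltnNge in HS.
set S1 := ball_in _ _ _ _.
have e : #|S| = (#|S1| + #|S :\: S1|)%N.
  rewrite cardsD.
  have -> : S :&: S1 = S1.
    by apply/setIidPr; apply/subsetP => z; rewrite inE => /andP [].
  have : S1 \subset S by apply/subsetP => z; rewrite inE => /andP [].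
  move/subset_leq_card; lia.
have h1 := IH (ltnW Ht) S1 (rcons p false).
have h2 := IH (ltnW Ht) (S :\: S1) (rcons p true).
have hl := HL S t.+1 Ht.
have hM : (M * 2 <= M * #|S|)%N by rewrite leq_mul2l HS orbT.
have -> : (M * t.+1 * #|S| = M * t * #|S1| + M * t * #|S :\: S1| + M * #|S|)%N.
  by rewrite e; nia.
lia.
Qed.

Theorem lemma3 :
  exists c : nat,
  forall (R : realFieldType) (T : finType) (d : T -> T -> R)
         (pick : {set T} -> T * T) (u : seq bool -> R) (k : nat),
    is_metric d ->
    diametral_picker d pick ->
    (forall p, 0 <= u p <= 1) ->
    (1 <= k <= #|T|)%N ->
    (rec_time d pick u k [set: T] [::] <= c * #|T| ^ c)%N.
Proof.
exists 8%N => R T d pick u k _ _ _ /andP [Hk1 Hkn].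
set n := #|T|.
have Hn : (1 <= n)%N by apply: leq_trans Hkn.
have HL : forall (S : {set T}) t, (t <= n)%N -> (local_cost S t + t <= 6 * n ^ 4)%N.
  move=> S t Ht; rewrite /local_cost.
  have Hs : (#|S| <= n)%N by apply: max_card.
  have a1 : (#|S| ^ 2 <= n ^ 2)%N by rewrite leq_exp2r.
  have a2 : (t ^ 2 <= n ^ 2)%N by rewrite leq_exp2r.
  have a3 : (t ^ 2 * (#|S| ^ 2 + 1) <= n ^ 2 * (n ^ 2 + 1))%N
    by apply: leq_mul => //; rewrite leq_add2r.
  have b1 : (n <= n ^ 4)%N by rewrite -{1}(expn1 n) leq_pexp2l.
  have b2 : (n ^ 2 <= n ^ 4)%N by rewrite leq_pexp2l.
  have b3 : (n ^ 2 * (n ^ 2 + 1) = n ^ 4 + n ^ 2)%N by rewrite mulnDr muln1 -expnD.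
  lia.
have := @rec_bound _ _ d pick u _ _ HL _ Hkn [set: T] [::].
rewrite cardsT -/n => h; apply: (leq_trans h).
have c1 : (6 * n ^ 4 * k * n <= 6 * n ^ 6)%N.
  have e6 : (n ^ 6 = n ^ 4 * n * n)%N by rewrite -!expnSr.
  rewrite e6 -!mulnA; apply: leq_mul (leqnn 6) _.
  by rewrite !leq_mul2l leq_mul2r Hkn !orbT.
have b1 : (n <= n ^ 6)%N by rewrite -{1}(expn1 n) leq_pexp2l.
have b2 : (1 <= n ^ 6)%N by rewrite expn_gt0 Hn.
have b3 : (n ^ 6 <= n ^ 8)%N by rewrite leq_pexp2l.
lia.
Qed.
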